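(* There exists a $(\circ,\wedge,\mathsf{A})$-algebra that is representable by partial functions and atomic, but has no atomic representation (equivalently, no complete representation) by partial functions. For instance, let the base be $\{p\}\sqcup\mathbb{N}_\infty$ with $\mathbb{N}_\infty=\mathbb{N}\cup\{\infty\}$, let $\mathcal{S}$ be the set of subsets of $\mathbb{N}_\infty$ that are either finite and omit $\infty$, or cofinite and contain $\infty$, and let $\mathfrak{F}$ consist of the identity functions restricted to $A\cup B$ with $A\subseteq\{p\}$, $B\in\mathcal{S}$, together with the function $f=\{(p,\infty)\}$. Then $\mathfrak{F}$ is closed under composition, intersection and antidomain, is atomic, and has no complete representation by partial functions.
   Context: A $(\circ,\wedge,\mathsf{A})$-algebra is a set with two binary operations $\circ,\wedge$ and one unary operation $\mathsf{A}$. An algebra of partial functions of this signature is a set of partial functions, with base $X$ the union of all their domains and ranges, closed under: composition $f\circ g=\{(x,z)\mid \exists y\,(x,y)\in f,(y,z)\in g\}$; intersection; antidomain $\mathsf{A}(f)=\{(x,x)\mid x\in X, x\notin\mathrm{dom}(f)\}$. A representation by partial functions is an isomorphism onto such an algebra. The order is $a\le b\iff a\wedge b=a$, with least element $0$. An atom is a minimal nonzero element; the algebra is atomic if every nonzero element is above an atom. A representation $\theta$ is atomic if whenever $(x,y)\in\theta(a)$ for some $a$, then $(x,y)\in\theta(b)$ for some atom $b$. It is complete if for every nonempty $S$ with $\bigwedge S$ existing, $\theta(\bigwedge S)=\bigcap\theta[S]$ (equivalently for joins and unions). *)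

(* Defs.v *)
From Stdlib Require Import Classical.
Unset Implicit Arguments.

Record CMAAlgebra : Type := {
  carrier :> Type;
  comp : carrier -> carrier -> carrier;
  meet : carrier -> carrier -> carrier;
  antidom : carrier -> carrier
}.

Section Defs.
Variable T : CMAAlgebra.

Definition le (a b : T) : Prop := meet T a b = a.

Definition is_zero (z : T) : Prop := forall b, le z b.

Definition is_atom (a : T) : Prop :=
  ~ is_zero a /\ forall b, le b a -> b <> a -> is_zero b.

Definition atomic_alg : Prop :=
  forall a, ~ is_zero a -> exists b, is_atom b /\ le b a.

Definition is_glb (S : T -> Prop) (m : T) : Prop :=
  (forall s, S s -> le m s) /\ (forall c, (forall s, S s -> le c s) -> le c m).

Definition rcomp (X : Type) (f g : X -> X -> Prop) : X -> X -> Prop :=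
  fun x z => exists y, f x y /\ g y z.

Definition base (X : Type) (th : T -> X -> X -> Prop) (x : X) : Prop :=
  exists a y, th a x y \/ th a y x.

Definition is_pfun_rep (X : Type) (th : T -> X -> X -> Prop) : Prop :=
  (forall a b, (forall x y, th a x y <-> th b x y) -> a = b) /\
  (forall a x y z, th a x y -> th a x z -> y = z) /\
  (forall a b x z, th (comp T a b) x z <-> rcomp X (th a) (th b) x z) /\
  (forall a b x y, th (meet T a b) x y <-> (th a x y /\ th b x y)) /\
  (forall a x y, th (antidom T a) x y <->
       (x = y /\ base X th x /\ ~ exists z, th a x z)).

Definition representable_pfun : Prop :=
  exists (X : Type) (th : T -> X -> X -> Prop), is_pfun_rep X th.

Definition atomic_rep (X : Type) (th : T -> X -> X -> Prop) : Prop :=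
  forall a x y, th a x y -> exists b, is_atom b /\ th b x y.

Definition complete_rep (X : Type) (th : T -> X -> X -> Prop) : Prop :=
  forall (S : T -> Prop) (m : T), (exists s, S s) -> is_glb S m ->
    forall x y, th m x y <-> (forall s, S s -> th s x y).

End Defs.

(* Main.v *)
Require Import Defs.
From Stdlib Require Import Arith Classical FunctionalExtensionality PropExtensionality ProofIrrelevance Lia.

Definition PX := option (option nat).
Definition fin (B : option nat -> Prop) := exists N, forall n, B (Some n) -> n < N.
Definition cof (B : option nat -> Prop) := exists N, forall n, N <= n -> B (Some n).
Definition goodB B := (fin B /\ ~ B None) \/ (cof B /\ B None).
Definition idrel (a : Prop) (B : option nat -> Prop) : PX -> PX -> Prop :=
  fun x y => x = y /\ match x with None => a | Some o => B o end.
Definition frel : PX -> PX -> Prop := fun x y => x = None /\ y = Some None.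
Definition inF (R : PX -> PX -> Prop) :=
  (exists a B, goodB B /\ forall x y, R x y <-> idrel a B x y) \/
  (forall x y, R x y <-> frel x y).

Lemma inF_ext R S : (forall x y, R x y <-> S x y) -> inF S -> inF R.
Proof.
  intros H [[a [B [HB HS]]]|HS]; [left; exists a, B; split; auto|right];
  intros x y; rewrite H; auto.
Qed.

Lemma goodB_inter B1 B2 : goodB B1 -> goodB B2 -> goodB (fun o => B1 o /\ B2 o).
Proof.
  intros [[[N HN] H1]|[[N HN] H1]] [[[M HM] H2]|[[M HM] H2]].
  - left; split; [exists N; intros n [h _]; auto| tauto].
  - left; split; [exists N; intros n [h _]; auto| tauto].
  - left; split; [exists M; intros n [_ h]; auto| tauto].
  - right; split; [exists (N + M); intros n h; split; [apply HN|apply HM]; lia| tauto].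
Qed.

Lemma goodB_compl B : goodB B -> goodB (fun o => ~ B o).
Proof.
  intros [[[N HN] H1]|[[N HN] H1]].
  - right; split; auto. exists N. intros n h h'. apply HN in h'. lia.
  - left; split; [|tauto]. exists N. intros n h.
    destruct (Nat.lt_ge_cases n N); auto. exfalso; apply h, HN; auto.
Qed.

Lemma goodB_empty : goodB (fun _ => False).
Proof. left; split; [exists 0; intros n []|tauto]. Qed.

Lemma goodB_full : goodB (fun _ => True).
Proof. right; split; [exists 0; auto|auto]. Qed.

Lemma inF_id a B : goodB B -> inF (idrel a B).
Proof. intros; left; exists a, B; split; [auto|tauto]. Qed.

Lemma inF_empty : inF (fun _ _ => False).
Proof.
  apply (inF_ext _ (idrel False (fun _ => False))); [|apply inF_id, goodB_empty].
  intros x y; unfold idrel; destruct x as [[n|]|]; tauto.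
Qed.

Lemma inF_f : inF frel.
Proof. right; tauto. Qed.

Lemma inF_comp R1 R2 : inF R1 -> inF R2 -> inF (rcomp PX R1 R2).
Proof.
  unfold rcomp.
  intros [[a1 [B1 [HB1 H1]]]|H1] [[a2 [B2 [HB2 H2]]]|H2].
  - apply (inF_ext _ (idrel (a1 /\ a2) (fun o => B1 o /\ B2 o)));
      [|apply inF_id, goodB_inter; auto].
    intros x z; split.
    + intros [y [h1 h2]]; apply H1 in h1; apply H2 in h2.
      destruct h1 as [-> h1]; destruct h2 as [-> h2]; split; auto.
      destruct z as [[n|]|]; tauto.
    + intros [-> h]. exists z; rewrite H1, H2; unfold idrel.
      destruct z as [[n|]|]; tauto.
  - destruct (classic a1) as [ha|ha].
    + apply (inF_ext _ frel); [|apply inF_f].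
      intros x z; split.
      * intros [y [h1 h2]]; apply H1 in h1; apply H2 in h2.
        destruct h1 as [-> h1]; exact h2.
      * intros [-> ->]. exists None; rewrite H1, H2; unfold idrel, frel; tauto.
    + apply (inF_ext _ (fun _ _ => False)); [|apply inF_empty].
      intros x z; split; [|tauto].
      intros [y [h1 h2]]; apply H1 in h1; apply H2 in h2.
      destruct h1 as [-> h1]; destruct h2 as [-> _]; tauto.
  - destruct (classic (B2 None)) as [hb|hb].
    + apply (inF_ext _ frel); [|apply inF_f].
      intros x z; split.
      * intros [y [h1 h2]]; apply H1 in h1; apply H2 in h2.
        destruct h2 as [-> h2]; exact h1.
      * intros [-> ->]. exists (Some None); rewrite H1, H2; unfold idrel, frel; tauto.
    + apply (inF_ext _ (fun _ _ => False)); [|apply inF_empty].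
      intros x z; split; [|tauto].
      intros [y [h1 h2]]; apply H1 in h1; apply H2 in h2.
      destruct h1 as [-> ->]; destruct h2 as [_ h2]; tauto.
  - apply (inF_ext _ (fun _ _ => False)); [|apply inF_empty].
    intros x z; split; [|tauto].
    intros [y [h1 h2]]; apply H1 in h1; apply H2 in h2.
    destruct h1 as [_ ->]; destruct h2 as [h _]; discriminate.
Qed.

Lemma inF_meet R1 R2 : inF R1 -> inF R2 -> inF (fun x y => R1 x y /\ R2 x y).
Proof.
  intros [[a1 [B1 [HB1 H1]]]|H1] [[a2 [B2 [HB2 H2]]]|H2].
  - apply (inF_ext _ (idrel (a1 /\ a2) (fun o => B1 o /\ B2 o)));
      [|apply inF_id, goodB_inter; auto].
    intros x z; rewrite H1, H2; unfold idrel; destruct x as [[n|]|]; tauto.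
  - apply (inF_ext _ (fun _ _ => False)); [|apply inF_empty].
    intros x z; rewrite H1, H2; unfold idrel, frel; split; [|tauto].
    intros [[e _] [e1 e2]]; subst; discriminate.
  - apply (inF_ext _ (fun _ _ => False)); [|apply inF_empty].
    intros x z; rewrite H1, H2; unfold idrel, frel; split; [|tauto].
    intros [[e1 e2] [e _]]; subst; discriminate.
  - apply (inF_ext _ frel); [|apply inF_f].
    intros x z; rewrite H1, H2; tauto.
Qed.

Lemma inF_anti R : inF R -> inF (fun x y => x = y /\ ~ exists z, R x z).
Proof.
  intros [[a [B [HB H]]]|H].
  - apply (inF_ext _ (idrel (~ a) (fun o => ~ B o))); [|apply inF_id, goodB_compl; auto].
    intros x y; unfold idrel. split.
    + intros [-> h]; split; auto. destruct y as [[n|]|] eqn:Ey; intro h'; apply h; exists y;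
      apply H; unfold idrel; rewrite Ey; tauto.
    + intros [-> h]; split; auto. intros [z hz]; apply H in hz; unfold idrel in hz.
      destruct hz as [<- hz]. destruct y as [[n|]|]; tauto.
  - apply (inF_ext _ (idrel False (fun _ => True))); [|apply inF_id, goodB_full].
    intros x y; unfold idrel. split.
    + intros [-> h]; split; auto. destruct y as [[n|]|]; auto.
      apply h; exists (Some None); apply H; unfold frel; auto.
    + intros [-> h]; split; auto. intros [z hz]; apply H in hz; destruct hz as [-> _]; auto.
Qed.

Definition Elt := {R : PX -> PX -> Prop | inF R}.
Notation rel a := (proj1_sig a).
Definition compE (a b : Elt) : Elt :=
  exist _ _ (inF_comp _ _ (proj2_sig a) (proj2_sig b)).
Definition meetE (a b : Elt) : Elt :=
  exist _ _ (inF_meet _ _ (proj2_sig a) (proj2_sig b)).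
Definition antiE (a : Elt) : Elt := exist _ _ (inF_anti _ (proj2_sig a)).
Definition TT : CMAAlgebra := {| carrier := Elt; comp := compE; meet := meetE; antidom := antiE |}.

Lemma elt_ext (a b : Elt) : (forall x y, rel a x y <-> rel b x y) -> a = b.
Proof.
  destruct a as [R HR], b as [S HS]; simpl; intro H.
  assert (R = S) by (extensionality x; extensionality y; apply propositional_extensionality; apply H).
  subst. f_equal; apply proof_irrelevance.
Qed.

Definition zE : Elt := exist _ _ inF_empty.
Definition fE : Elt := exist _ _ inF_f.
Definition topE : Elt := exist _ _ (inF_id True _ goodB_full).

Lemma inF_sN n : inF (fun x y => x = Some (Some n) /\ y = x).
Proof.
  apply (inF_ext _ (idrel False (fun o => o = Some n))).
  - intros x y; unfold idrel; split.
    + intros [-> ->]; split; auto.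
    + intros [-> h]; destruct y as [[m|]|]; try discriminate; try tauto; injection h; intros; subst; auto.
  - apply inF_id. left; split; [exists (S n); intros m h; injection h; lia| discriminate].
Qed.
Definition sN n : Elt := exist _ _ (inF_sN n).

Lemma inF_sP : inF (fun x y => x = None /\ y = x).
Proof.
  apply (inF_ext _ (idrel True (fun o => False))).
  - intros x y; unfold idrel; split.
    + intros [-> ->]; split; auto.
    + intros [-> h]; destruct y as [[m|]|]; try tauto.
  - apply inF_id, goodB_empty.
Qed.
Definition sP : Elt := exist _ _ inF_sP.

Lemma inF_cofN n : inF (idrel False (fun o => o = None \/ exists m, o = Some m /\ n <= m)).
Proof. apply inF_id. right; split; [exists n; intros m h; right; eauto|auto]. Qed.
Definition cofN n : Elt := exist _ _ (inF_cofN n).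

Lemma le_of_incl (a b : TT) : (forall x y, rel a x y -> rel b x y) -> le TT a b.
Proof. intro H; apply elt_ext; intros x y; simpl; split; [tauto|]; intro h; split; auto. Qed.

Lemma incl_of_le (a b : TT) : le TT a b -> forall x y, rel a x y -> rel b x y.
Proof.
  intros H x y h. assert (h' : rel (meet TT a b) x y) by (unfold le in H; rewrite H; exact h).
  exact (proj2 h').
Qed.

Lemma is_zero_iff (a : TT) : is_zero TT a <-> forall x y, ~ rel a x y.
Proof.
  split.
  - intros H x y h. exact (incl_of_le a zE (H zE) x y h).
  - intros H b; apply le_of_incl; intros x y h; exfalso; eapply H; eauto.
Qed.

Lemma nonzero_pair (a : TT) : ~ is_zero TT a -> exists x y, rel a x y.
Proof.
  intro H. apply NNPP; intro H'. apply H, is_zero_iff. intros x y h; apply H'; eauto.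
Qed.

Lemma atom_sing (a : TT) x0 y0 : (forall x y, rel a x y <-> x = x0 /\ y = y0) -> is_atom TT a.
Proof.
  intro H. split.
  - intro Hz. rewrite is_zero_iff in Hz. apply (Hz x0 y0), H; auto.
  - intros b Hb Hne. apply is_zero_iff. intros x y hb.
    apply Hne, elt_ext. intros u v; split; [apply (incl_of_le _ _ Hb)|].
    intro hu. apply H in hu; destruct hu; subst.
    pose proof (incl_of_le _ _ Hb _ _ hb) as hh; apply H in hh; destruct hh; subst; auto.
Qed.

Lemma atom_below (b c : TT) : is_atom TT b -> le TT c b -> c = b \/ is_zero TT c.
Proof. intros [_ H] Hc. destruct (classic (c = b)); auto. Qed.

Lemma rel_fun (a : TT) x y z : rel a x y -> rel a x z -> y = z.
Proof.
  destruct a as [R [[a0 [B [HB H]]]|H]]; simpl; intros h1 h2;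
  apply H in h1; apply H in h2.
  - destruct h1 as [<- _]; destruct h2 as [<- _]; auto.
  - destruct h1 as [_ ->]; destruct h2 as [_ ->]; auto.
Qed.

Lemma inf_to_nat (c : TT) : rel c (Some None) (Some None) ->
  exists k, rel c (Some (Some k)) (Some (Some k)).
Proof.
  destruct c as [R [[a0 [B [HB H]]]|H]]; simpl; intro h; apply H in h.
  - destruct h as [_ h]. destruct HB as [[_ hn]|[[N HN] _]]; [tauto|].
    exists N. apply H. unfold idrel. split; auto.
  - destruct h as [h _]; discriminate.
Qed.

Lemma atomic_TT : atomic_alg TT.
Proof.
  intros a Ha. destruct (nonzero_pair a Ha) as [x [y h]].
  pose proof (proj2_sig a) as Hin.
  destruct Hin as [[a0 [B [HB H]]]|H].
  - apply H in h. destruct h as [<- hx]. destruct x as [[n|]|].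
    + exists (sN n); split.
      * apply (atom_sing _ (Some (Some n)) (Some (Some n))). simpl; intros u v; split;
          intros [-> ->]; auto.
      * apply le_of_incl; simpl; intros u v [-> ->]. apply H; unfold idrel; auto.
    + destruct HB as [[_ hn]|[[N HN] _]]; [tauto|].
      exists (sN N); split.
      * apply (atom_sing _ (Some (Some N)) (Some (Some N))). simpl; intros u v; split;
          intros [-> ->]; auto.
      * apply le_of_incl; simpl; intros u v [-> ->]. apply H; unfold idrel; auto.
    + exists sP; split.
      * apply (atom_sing _ None None). simpl; intros u v; split; intros [-> ->]; auto.
      * apply le_of_incl; simpl; intros u v [-> ->]. apply H; unfold idrel; auto.
  - exists a; split.
    + apply (atom_sing _ None (Some None)). exact H.
    + apply le_of_incl; auto.
Qed.

Lemma rep_TT : is_pfun_rep TT PX (fun a => proj1_sig a).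
Proof.
  split; [|split; [|split; [|split]]].
  - intros a b H; apply elt_ext; auto.
  - intros a x y z; apply rel_fun.
  - intros a b x z; simpl; tauto.
  - intros a b x y; simpl; tauto.
  - intros a x y; simpl. split.
    + intros [e h]; split; auto; split; auto. exists topE, x; left.
      simpl; unfold idrel; destruct x as [[n|]|]; auto.
    + tauto.
Qed.

Lemma comp_f_diag (e : TT) : rel e (Some None) (Some None) ->
  (forall w z, rel e w z -> w = z) -> comp TT fE e = fE.
Proof.
  intros h1 h2. apply elt_ext; intros x z; simpl; unfold rcomp, frel; split.
  - intros [w [[-> ->] h]]. apply h2 in h; subst; auto.
  - intros [-> ->]; exists (Some None); auto.
Qed.

Definition z0 : TT := meet TT fE (antidom TT fE).

Section Rep.
Variable Y : Type.
Variable th : TT -> Y -> Y -> Prop.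
Hypothesis Hrep : is_pfun_rep TT Y th.

Lemma R1 (c : TT) : is_zero TT c -> forall x y, ~ th c x y.
Proof.
  destruct Hrep as [Hinj [Hfun [Hcomp [Hmeet Hanti]]]].
  intros Hz x y h. specialize (Hz z0). unfold le in Hz.
  rewrite <- Hz in h. apply Hmeet in h. destruct h as [_ h].
  apply Hmeet in h. destruct h as [h1 h2]. apply Hanti in h2.
  destruct h2 as [_ [_ h2]]. apply h2; eauto.
Qed.

Lemma R2 : exists x y, th fE x y.
Proof.
  destruct Hrep as [Hinj [Hfun [Hcomp [Hmeet Hanti]]]].
  apply NNPP; intro H.
  assert (fE = z0).
  { apply Hinj. intros x y; split; intro h.
    - exfalso; apply H; eauto.
    - apply Hmeet in h. destruct h as [h1 h2]. apply Hanti in h2.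
      destruct h2 as [_ [_ h2]]. exfalso; apply h2; eauto. }
  assert (h : rel z0 None (Some None)) by (rewrite <- H0; simpl; unfold frel; auto).
  simpl in h. unfold frel in h. destruct h as [_ [e _]]; discriminate.
Qed.

Lemma R3 (e : TT) : comp TT fE e = fE -> forall x y, th fE x y -> th e y y.
Proof.
  destruct Hrep as [Hinj [Hfun [Hcomp [Hmeet Hanti]]]].
  intros He x y h. rewrite <- He in h. pose proof h as h'.
  apply Hcomp in h. destruct h as [w [h1 h2]].
  rewrite He in h'. pose proof (Hfun _ _ _ _ h' h1) as E. subst w. exact h2.
Qed.

Lemma fAf : comp TT fE (antidom TT fE) = fE.
Proof.
  apply comp_f_diag.
  - simpl. split; auto. intros [z [e _]]; discriminate.
  - simpl; intros w z [e _]; auto.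
Qed.

Lemma R4 x y b : th fE x y -> is_atom TT b -> th b y y -> False.
Proof.
  intros hf Hb hb.
  pose proof (R3 _ fAf x y hf) as hA.
  destruct Hrep as [Hinj [Hfun [Hcomp [Hmeet Hanti]]]].
  set (c := meet TT b (antidom TT fE)).
  assert (hc : th c y y) by (apply Hmeet; auto).
  assert (Hcb : le TT c b) by (apply le_of_incl; intros u v h; exact (proj1 h)).
  destruct (atom_below _ _ Hb Hcb) as [E|Z]; [|exact (R1 _ Z _ _ hc)].
  assert (Hsub : forall u v, rel b u v -> u = v /\ u <> None).
  { intros u v h. rewrite <- E in h. destruct h as [_ [e h]]. split; auto.
    intro; subst u. apply h. exists (Some None); simpl; unfold frel; auto. }
  assert (Hn : exists n, rel b (Some (Some n)) (Some (Some n))).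
  { destruct (nonzero_pair b (proj1 Hb)) as [u [v h]].
    destruct (Hsub _ _ h) as [<- hu]. destruct u as [[n|]|].
    - eauto.
    - apply inf_to_nat; auto.
    - tauto. }
  destruct Hn as [n hn].
  assert (Hsb : le TT (sN n) b) by (apply le_of_incl; simpl; intros u v [-> ->]; auto).
  destruct (atom_below _ _ Hb Hsb) as [E2|Z].
  - rewrite <- E2 in hb.
    assert (Hz : is_zero TT (comp TT fE (sN n))).
    { apply is_zero_iff. simpl; unfold rcomp, frel. intros u v [w [[_ ->] [h _]]]; discriminate. }
    apply (R1 _ Hz x y). apply Hcomp. exists y; auto.
  - rewrite is_zero_iff in Z. apply (Z (Some (Some n)) (Some (Some n))). simpl; auto.
Qed.

Lemma not_atomic : ~ atomic_rep TT Y th.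
Proof.
  intro Hat. destruct R2 as [x [y h]].
  destruct (Hat _ _ _ (R3 _ fAf x y h)) as [b [Hb hb]].
  exact (R4 x y b h Hb hb).
Qed.

Lemma fcof n : comp TT fE (cofN n) = fE.
Proof.
  apply comp_f_diag.
  - simpl; unfold idrel; auto.
  - simpl; intros w z [e _]; auto.
Qed.

Lemma not_complete : ~ complete_rep TT Y th.
Proof.
  intro Hc. destruct R2 as [x [y h]].
  set (SS := fun c : TT => exists n, c = cofN n).
  assert (Hg : is_glb TT SS zE).
  { split.
    - intros s _. apply is_zero_iff. simpl; auto.
    - intros c Hcs. apply le_of_incl. intros u v hu.
      assert (K : forall n u v, rel c u v -> u = v /\ match u with None => False
                  | Some o => o = None \/ exists m, o = Some m /\ n <= m end).
      { intros n u' v' h'. exact (incl_of_le _ _ (Hcs (cofN n) (ex_intro _ n eq_refl)) _ _ h'). }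
      assert (K2 : forall k, ~ rel c (Some (Some k)) (Some (Some k))).
      { intros k hk. destruct (K (S k) _ _ hk) as [_ [e|[m [e hm]]]]; [discriminate|].
        injection e; lia. }
      destruct (K 0 _ _ hu) as [<- hh]. destruct u as [[k|]|]; [eapply K2; eauto| |tauto].
      destruct (inf_to_nat _ hu) as [k hk]. eapply K2; eauto. }
  assert (hz : th zE y y).
  { apply (Hc SS zE (ex_intro _ (cofN 0) (ex_intro _ 0 eq_refl)) Hg).
    intros s [n ->]. exact (R3 _ (fcof n) x y h). }
  refine (R1 zE _ _ _ hz). apply is_zero_iff; simpl; auto.
Qed.
End Rep.

Theorem mainTheorem11 :
  exists T : CMAAlgebra,
    representable_pfun T /\ atomic_alg T /\
    (forall (X : Type) (th : T -> X -> X -> Prop),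
        is_pfun_rep T X th -> ~ atomic_rep T X th) /\
    (forall (X : Type) (th : T -> X -> X -> Prop),
        is_pfun_rep T X th -> ~ complete_rep T X th).
Proof.
  exists TT. split; [exists PX, (fun a => proj1_sig a); exact rep_TT|split; [exact atomic_TT|split]].
  - intros X th H; apply not_atomic; auto.
  - intros X th H; apply not_complete; auto.
Qed.
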